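(* Consider the binary adder MAC and, for $\alpha\in[0,\frac12]$, the auxiliary channel $p_\alpha(u|y)$ from $\mathcal Y=\{0,1,2\}$ to $\mathcal U=\{0,1\}$ with $p_\alpha(0|0)=1-\alpha$, $p_\alpha(1|0)=\alpha$, $p_\alpha(0|1)=p_\alpha(1|1)=\frac12$, $p_\alpha(1|2)=1-\alpha$, $p_\alpha(0|2)=\alpha$. For bit-pipe capacities $C_1,C_2\ge0$, consider the optimization $$\max_{p(x_1,x_2)}\ \min_{0\le\alpha\le\frac12}\ \min\left\{\begin{array}{l} C_1+C_2,\\ C_1+I(X_2;Y|X_1),\\ C_2+I(X_1;Y|X_2),\\ I(X_1X_2;Y),\\ \tfrac12\big(C_1+C_2+I(X_1X_2;Y|U)+I(X_1;U|X_2)+I(X_2;U|X_1)\big)\end{array}\right\}$$ over pmfs $p(x_1,x_2)$ on $\{0,1\}^2$, with quantities evaluated for $p(x_1,x_2)p(y|x_1,x_2)p_\alpha(u|y)$. Then there is an optimizing $p(x_1,x_2)$ that is a doubly symmetric binary source.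
   Context: The binary adder MAC has $\mathcal X_1=\mathcal X_2=\{0,1\}$, $\mathcal Y=\{0,1,2\}$ and $Y=X_1+X_2$ (deterministically). A pair $(X_1,X_2)$ is a doubly symmetric binary source with parameter $p$ if $p(0,0)=p(1,1)=\frac{1-p}{2}$ and $p(0,1)=p(1,0)=\frac p2$. Logarithms base 2. *)

(* Defs.v *)
From Stdlib Require Import Reals List Arith.
Import ListNotations.
Open Scope R_scope.

Definition b2n (b : bool) : nat := if b then 1%nat else 0%nat.
Definition adder (x1 x2 : bool) : nat := (b2n x1 + b2n x2)%nat.

Definition is_pmf2 (p : bool -> bool -> R) : Prop :=
  (forall a b, 0 <= p a b) /\
  p false false + p false true + p true false + p true true = 1.

Definition dsbs (q : R) (a b : bool) : R :=
  if Bool.eqb a b then (1 - q) / 2 else q / 2.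

(** Auxiliary channel p_alpha(u|y), u in {0,1} encoded as bool (true = 1). *)
Definition aux_chan (alpha : R) (y : nat) (u : bool) : R :=
  match y with
  | O => if u then alpha else 1 - alpha
  | 1%nat => / 2
  | _ => if u then 1 - alpha else alpha
  end.

(** Sample space of (x1, x2, u); y = adder x1 x2 is determined. *)
Definition omegas : list (bool * bool * bool) :=
  [ (false,false,false); (false,false,true); (false,true,false); (false,true,true);
    (true,false,false); (true,false,true); (true,true,false); (true,true,true) ].

Definition joint (p : bool -> bool -> R) (alpha : R) (w : bool * bool * bool) : R :=
  let '(x1, x2, u) := w in p x1 x2 * aux_chan alpha (adder x1 x2) u.

(** A set of variables among (X1, X2, Y, U), given by inclusion flags;
    its value at an outcome is injectively coded as a nat < 24. *)
Record vars := Vars { vX1 : bool; vX2 : bool; vY : bool; vU : bool }.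

Definition vunion (A B : vars) : vars :=
  Vars (vX1 A || vX1 B) (vX2 A || vX2 B) (vY A || vY B) (vU A || vU B).

Definition code (S : vars) (w : bool * bool * bool) : nat :=
  let '(x1, x2, u) := w in
  ((if vX1 S then b2n x1 else 0) + 2 * (if vX2 S then b2n x2 else 0)
   + 4 * (if vY S then adder x1 x2 else 0) + 12 * (if vU S then b2n u else 0))%nat.

Definition prob_eq (P : bool * bool * bool -> R) (S : vars) (v : nat) : R :=
  fold_right Rplus 0
    (map (fun w => if Nat.eq_dec (code S w) v then P w else 0) omegas).

Definition plogp (x : R) : R := if Rle_dec x 0 then 0 else x * (ln x / ln 2).

Definition Ent (P : bool * bool * bool -> R) (S : vars) : R :=
  - fold_right Rplus 0 (map (fun v => plogp (prob_eq P S v)) (seq 0 24)).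

Definition CMI (P : bool * bool * bool -> R) (A B C : vars) : R :=
  Ent P (vunion A C) + Ent P (vunion B C) - Ent P (vunion (vunion A B) C) - Ent P C.

Definition V0  := Vars false false false false.
Definition VX1 := Vars true false false false.
Definition VX2 := Vars false true false false.
Definition VX12 := Vars true true false false.
Definition VY  := Vars false false true false.
Definition VU  := Vars false false false true.

Definition obj (C1 C2 : R) (p : bool -> bool -> R) (alpha : R) : R :=
  let P := joint p alpha in
  Rmin (C1 + C2)
  (Rmin (C1 + CMI P VX2 VY VX1)
  (Rmin (C2 + CMI P VX1 VY VX2)
  (Rmin (CMI P VX12 VY V0)
        (/ 2 * (C1 + C2 + CMI P VX12 VY VU + CMI P VX1 VU VX2 + CMI P VX2 VU VX1))))).

Definition is_min_alpha (C1 C2 : R) (p : bool -> bool -> R) (v : R) : Prop :=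
  (forall a, 0 <= a <= / 2 -> v <= obj C1 C2 p a) /\
  (forall w, (forall a, 0 <= a <= / 2 -> w <= obj C1 C2 p a) -> w <= v).

(* Main.v *)
Require Import Defs.
From Stdlib Require Import Reals Lra Classical ClassicalEpsilon FunctionalExtensionality.
Open Scope R_scope.

Lemma ln2_pos : 0 < ln 2.
Proof. pose proof ln_lt_2; lra. Qed.

Lemma ln_le_sub1 : forall x, 0 < x -> ln x <= x - 1.
Proof. intros x Hx. pose proof (exp_ineq1_le (ln x)). rewrite exp_ln in H; lra. Qed.

Lemma ln_le_mono : forall x y, 0 < x -> x <= y -> ln x <= ln y.
Proof. intros x y Hx Hxy. destruct (Rle_lt_or_eq_dec x y Hxy) as [H|H].
 - left. apply ln_increasing; auto.
 - subst; lra. Qed.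

Lemma plogp0 : plogp 0 = 0.
Proof. unfold plogp. destruct (Rle_dec 0 0); [reflexivity| exfalso; apply n; apply Rle_refl]. Qed.

Lemma plogp_pos : forall x, 0 < x -> plogp x = x * (ln x / ln 2).
Proof. intros x Hx. unfold plogp. destruct (Rle_dec x 0); [lra|reflexivity]. Qed.

Lemma plogp_nonpos : forall x, x <= 0 -> plogp x = 0.
Proof. intros x Hx. unfold plogp. destruct (Rle_dec x 0); [reflexivity|lra]. Qed.

Definition psi (x s : R) : R := if Rle_dec x 0 then 0 else x * (ln s - ln x) / ln 2.

Lemma psi0 : forall s, psi 0 s = 0.
Proof. intros. unfold psi. destruct (Rle_dec 0 0); [reflexivity|lra]. Qed.

Lemma psi_pos : forall x s, 0 < x -> psi x s = x * (ln s - ln x) / ln 2.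
Proof. intros. unfold psi. destruct (Rle_dec x 0); [lra|reflexivity]. Qed.

Lemma plogp_psi_split : forall x s, 0 <= x -> 0 < s -> plogp x = x * (ln s / ln 2) - psi x s.
Proof. intros x s Hx Hs. destruct (Req_dec x 0) as [E|E].
 - subst. rewrite plogp0, psi0. ring.
 - rewrite plogp_pos by lra. rewrite psi_pos by lra. pose proof ln2_pos. field. lra. Qed.

Lemma G2 : forall x y s, 0 <= x -> 0 <= y -> s = x + y ->
  plogp s - plogp x - plogp y = psi x s + psi y s.
Proof. intros x y s Hx Hy Hs. destruct (Req_dec s 0) as [E|E].
 - assert (x = 0) by lra. assert (y = 0) by lra. subst. rewrite E, plogp0, psi0. ring.
 - rewrite (plogp_psi_split x s), (plogp_psi_split y s) by lra.
   rewrite (plogp_pos s) by lra. subst s. field. pose proof ln2_pos; lra. Qed.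

Lemma G3 : forall x y z s, 0 <= x -> 0 <= y -> 0 <= z -> s = x + y + z ->
  plogp s - plogp x - plogp y - plogp z = psi x s + psi y s + psi z s.
Proof. intros x y z s Hx Hy Hz Hs. destruct (Req_dec s 0) as [E|E].
 - assert (x = 0) by lra. assert (y = 0) by lra. assert (z = 0) by lra. subst. rewrite E, plogp0, psi0. ring.
 - rewrite (plogp_psi_split x s), (plogp_psi_split y s), (plogp_psi_split z s) by lra.
   rewrite (plogp_pos s) by lra. subst s. field. pose proof ln2_pos; lra. Qed.

Lemma Nneg : forall x, 0 <= x -> - plogp x = psi x 1.
Proof. intros. rewrite (plogp_psi_split x 1) by lra. rewrite ln_1. field. pose proof ln2_pos; lra. Qed.

Lemma plogp_mul : forall x k, 0 <= x -> 0 <= k -> plogp (x * k) = x * plogp k + k * plogp x.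
Proof. intros x k Hx Hk. destruct (Req_dec x 0) as [E|E]; [subst; rewrite Rmult_0_l, plogp0; ring|].
 destruct (Req_dec k 0) as [F|F]; [subst; rewrite Rmult_0_r, plogp0; ring|].
 rewrite !plogp_pos by (try apply Rmult_lt_0_compat; lra). rewrite ln_mult by lra. field.
 pose proof ln2_pos; lra. Qed.

Lemma Lin : forall x k1 k2, 0 <= x -> 0 <= k1 -> 0 <= k2 -> k1 + k2 = 1 ->
  plogp (x * k1) + plogp (x * k2) - plogp x = x * (plogp k1 + plogp k2).
Proof. intros. rewrite !plogp_mul by lra.
 replace (k2 * plogp x) with ((1 - k1) * plogp x) by (f_equal; lra). ring. Qed.

Lemma lsi_core : forall x1 s1 X S, 0 < x1 -> 0 < s1 -> 0 < X -> 0 < S ->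
  x1 * (ln s1 - ln x1) <= x1 * (ln S - ln X) + (s1 * X / S - x1).
Proof. intros x1 s1 X S H1 H2 H3 H4.
 assert (E : ln s1 - ln x1 - (ln S - ln X) = ln (s1 * X / (x1 * S))).
 { unfold Rdiv. rewrite ln_mult, ln_Rinv, ln_mult, ln_mult; try lra;
   try apply Rmult_lt_0_compat; try apply Rinv_0_lt_compat; try apply Rmult_lt_0_compat; lra. }
 pose proof (ln_le_sub1 (s1 * X / (x1 * S))) as L.
 assert (0 < s1 * X / (x1 * S)) by (unfold Rdiv; apply Rmult_lt_0_compat; [apply Rmult_lt_0_compat; lra| apply Rinv_0_lt_compat, Rmult_lt_0_compat; lra]).
 specialize (L H). rewrite <- E in L.
 assert (x1 * (ln s1 - ln x1 - (ln S - ln X)) <= x1 * (s1 * X / (x1 * S) - 1)) by (apply Rmult_le_compat_l; lra).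
 replace (x1 * (s1 * X / (x1 * S) - 1)) with (s1 * X / S - x1) in H0 by (field; lra). lra. Qed.

Lemma psi_mid : forall x1 s1 x2 s2 x s, 0 <= x1 <= s1 -> 0 <= x2 <= s2 ->
  x = (x1 + x2) / 2 -> s = (s1 + s2) / 2 -> psi x1 s1 + psi x2 s2 <= 2 * psi x s.
Proof. intros x1 s1 x2 s2 x s [A1 B1] [A2 B2] Hx Hs. pose proof ln2_pos as L2.
 assert (Hr : 0 < x -> 2 * psi x s = (x1 + x2) * (ln (s1 + s2) - ln (x1 + x2)) / ln 2).
 { intro Hp. rewrite psi_pos by lra. subst x s. unfold Rdiv.
   rewrite (ln_mult (s1+s2)), (ln_mult (x1+x2)) by lra. field. lra. }
 destruct (Req_dec x1 0) as [E1|E1]; destruct (Req_dec x2 0) as [E2|E2].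
 - subst. replace ((0+0)/2) with 0 by field. rewrite !psi0. lra.
 - subst x1. rewrite psi0, Hr by lra. rewrite psi_pos by lra.
   rewrite Rplus_0_l. unfold Rdiv. rewrite Rplus_0_l. apply Rmult_le_compat_r; [left; apply Rinv_0_lt_compat; lra|].
   apply Rmult_le_compat_l; [lra|]. pose proof (ln_le_mono s2 (s1+s2)); lra.
 - subst x2. rewrite psi0, Hr by lra. rewrite psi_pos by lra.
   rewrite Rplus_0_r. unfold Rdiv. rewrite Rplus_0_r. apply Rmult_le_compat_r; [left; apply Rinv_0_lt_compat; lra|].
   apply Rmult_le_compat_l; [lra|]. pose proof (ln_le_mono s1 (s1+s2)); lra.
 - rewrite Hr by lra. rewrite !psi_pos by lra.
   pose proof (lsi_core x1 s1 (x1+x2) (s1+s2)) as C1.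
   pose proof (lsi_core x2 s2 (x1+x2) (s1+s2)) as C2.
   assert (x1 * (ln s1 - ln x1) + x2 * (ln s2 - ln x2) <= (x1 + x2) * (ln (s1 + s2) - ln (x1 + x2))).
   { assert (s1 * (x1 + x2) / (s1 + s2) + s2 * (x1 + x2) / (s1 + s2) = x1 + x2) by (field; lra).
     specialize (C1 ltac:(lra) ltac:(lra) ltac:(lra) ltac:(lra)).
     specialize (C2 ltac:(lra) ltac:(lra) ltac:(lra) ltac:(lra)). lra. }
   unfold Rdiv. rewrite <- Rmult_plus_distr_r. apply Rmult_le_compat_r; [left; apply Rinv_0_lt_compat; lra| lra].
Qed.

Definition mk (a b c d : R) (x y : bool) : R :=
  if x then (if y then d else c) else (if y then b else a).

Lemma r1 : forall x y, x * (1 - y) + x * y = x. Proof. intros; ring. Qed.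
Lemma r2 : forall x y, x * y + x * (1 - y) = x. Proof. intros; ring. Qed.
Lemma r3 : forall x, x * / 2 + x * / 2 = x. Proof. intros; field. Qed.
Lemma r4 : forall x y z, x * (1 - y) + (x * y + z) = x + z. Proof. intros; ring. Qed.
Lemma r5 : forall x z, x * / 2 + (x * / 2 + z) = x + z. Proof. intros; field. Qed.

Ltac simp_obj :=
  cbv [obj CMI V0 VX1 VX2 VX12 VY VU Ent prob_eq omegas code joint vunion vX1 vX2 vY vU b2n adder List.map List.fold_right List.seq orb mk];
  cbn [Nat.add Nat.mul Nat.eq_dec nat_rec nat_rect aux_chan];
  repeat rewrite ?Rplus_0_l, ?Rplus_0_r; rewrite ?plogp0;
  repeat rewrite ?Rplus_0_l, ?Rplus_0_r;
  rewrite ?r4, ?r5, ?r1, ?r2, ?r3, ?r4, ?r5, ?r1, ?r2, ?r3.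

Lemma Rmin_mono : forall x1 x2 y1 y2, x1 <= y1 -> x2 <= y2 -> Rmin x1 x2 <= Rmin y1 y2.
Proof. intros. unfold Rmin. destruct (Rle_dec x1 x2); destruct (Rle_dec y1 y2); lra. Qed.

Lemma main_ineq : forall C1 C2 a b c d m n al,
  0 <= a -> 0 <= b -> 0 <= c -> 0 <= d -> 0 <= al <= 1 ->
  a + b + c + d = 1 -> m = (a + d) / 2 -> n = (b + c) / 2 ->
  obj C1 C2 (mk a b c d) al <= obj C1 C2 (mk m n n m) al.
Proof.
intros C1 C2 a b c d m n al Ha Hb Hc Hd [Hl Hu] Hs Hm Hn.
assert (Hm0 : 0 <= m) by lra. assert (Hn0 : 0 <= n) by lra.
simp_obj.
replace (n + m) with (m + n) by ring.
apply Rmin_mono; [lra|].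
apply Rmin_mono.
{ pose proof (G2 a b (a+b)) as E1. pose proof (G2 c d (c+d)) as E2. pose proof (G2 m n (m+n)) as E3.
  pose proof (psi_mid a (a+b) d (c+d) m (m+n)) as M1. pose proof (psi_mid b (a+b) c (c+d) n (m+n)) as M2.
  specialize (E1 Ha Hb eq_refl). specialize (E2 Hc Hd eq_refl). specialize (E3 Hm0 Hn0 eq_refl).
  specialize (M1 ltac:(lra) ltac:(lra) ltac:(lra) ltac:(lra)).
  specialize (M2 ltac:(lra) ltac:(lra) ltac:(lra) ltac:(lra)). lra. }
apply Rmin_mono.
{ pose proof (G2 a c (a+c)) as E1. pose proof (G2 b d (b+d)) as E2. pose proof (G2 m n (m+n)) as E3.
  pose proof (psi_mid a (a+c) d (b+d) m (m+n)) as M1. pose proof (psi_mid c (a+c) b (b+d) n (m+n)) as M2.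
  specialize (E1 Ha Hc eq_refl). specialize (E2 Hb Hd eq_refl). specialize (E3 Hm0 Hn0 eq_refl).
  specialize (M1 ltac:(lra) ltac:(lra) ltac:(lra) ltac:(lra)).
  specialize (M2 ltac:(lra) ltac:(lra) ltac:(lra) ltac:(lra)). lra. }
apply Rmin_mono.
{ replace (n + n) with (b + c) by lra.
  assert (plogp (m + (n + (m + n))) = plogp (a + (b + (c + d)))) as T by (f_equal; lra).
  pose proof (Nneg a Ha). pose proof (Nneg d Hd). pose proof (Nneg m Hm0).
  pose proof (psi_mid a 1 d 1 m 1 ltac:(lra) ltac:(lra) ltac:(lra) ltac:(lra)). lra. }
apply Rmult_le_compat_l; [lra|].
set (be := 1 - al) in *. assert (Hbe0 : 0 <= be) by (unfold be; lra). assert (Hbe1 : be <= 1) by (unfold be; lra).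
assert (Hab : al + be = 1) by (unfold be; ring).
clearbody be.
assert (P1 : 0 <= a*be) by (apply Rmult_le_pos; lra).
assert (P2 : 0 <= a*al) by (apply Rmult_le_pos; lra).
assert (P3 : 0 <= d*be) by (apply Rmult_le_pos; lra).
assert (P4 : 0 <= d*al) by (apply Rmult_le_pos; lra).
assert (P5 : 0 <= m*be) by (apply Rmult_le_pos; lra).
assert (P6 : 0 <= m*al) by (apply Rmult_le_pos; lra).
assert (P7 : 0 <= b*/2) by lra.
assert (P8 : 0 <= c*/2) by lra.
assert (P9 : 0 <= n*/2) by lra.
assert (Ea : a*be + a*al = a) by (replace al with (1 - be) by lra; ring).
assert (Ed : d*be + d*al = d) by (replace al with (1 - be) by lra; ring).
pose proof (G3 (a*be) (b*/2 + c*/2) (d*al) (a * be + (b * / 2 + (c * / 2 + d * al)))) as X1.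
pose proof (G3 (a*al) (b*/2 + c*/2) (d*be) (a * al + (b * / 2 + (c * / 2 + d * be)))) as X2.
pose proof (G3 (m*be) n (m*al) (m * be + (n + m * al))) as X3.
pose proof (G3 (m*al) n (m*be) (m * al + (n + m * be))) as X4.
specialize (X1 ltac:(lra) ltac:(lra) ltac:(lra) ltac:(ring)).
specialize (X2 ltac:(lra) ltac:(lra) ltac:(lra) ltac:(ring)).
specialize (X3 ltac:(lra) ltac:(lra) ltac:(lra) ltac:(ring)).
specialize (X4 ltac:(lra) ltac:(lra) ltac:(lra) ltac:(ring)).
assert (EU : m * al + (n + m * be) = m * be + (n + m * al)) by ring.
rewrite EU in X4 |- *.
pose proof (psi_mid (a*be) (a * be + (b * / 2 + (c * / 2 + d * al))) (d*be) (a * al + (b * / 2 + (c * / 2 + d * be))) (m*be) (m * be + (n + m * al))) as XM1.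
pose proof (psi_mid (d*al) (a * be + (b * / 2 + (c * / 2 + d * al))) (a*al) (a * al + (b * / 2 + (c * / 2 + d * be))) (m*al) (m * be + (n + m * al))) as XM2.
pose proof (psi_mid (b*/2 + c*/2) (a * be + (b * / 2 + (c * / 2 + d * al))) (b*/2 + c*/2) (a * al + (b * / 2 + (c * / 2 + d * be))) n (m * be + (n + m * al))) as XM3.
specialize (XM1 ltac:(lra) ltac:(lra) ltac:(rewrite Hm; field) ltac:(rewrite Hm, Hn; field; lra)).
specialize (XM2 ltac:(lra) ltac:(lra) ltac:(rewrite Hm; field) ltac:(rewrite Hm, Hn; field; lra)).
specialize (XM3 ltac:(lra) ltac:(lra) ltac:(rewrite Hn; field) ltac:(rewrite Hm, Hn; field; lra)).
pose proof (G2 (a*be + c*/2) (a*al + c*/2) (a+c) ltac:(lra) ltac:(lra) ltac:(replace al with (1 - be) by lra; field)) as Y1.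
pose proof (G2 (b*/2 + d*al) (b*/2 + d*be) (b+d) ltac:(lra) ltac:(lra) ltac:(replace al with (1 - be) by lra; field)) as Y2.
pose proof (G2 (m*be + n*/2) (m*al + n*/2) (m+n) ltac:(lra) ltac:(lra) ltac:(replace al with (1 - be) by lra; field)) as Y3.
pose proof (G2 (n*/2 + m*al) (n*/2 + m*be) (m+n) ltac:(lra) ltac:(lra) ltac:(replace al with (1 - be) by lra; field)) as Y4.
assert (Q1 : psi (n*/2 + m*be) (m+n) = psi (m*be + n*/2) (m+n)) by (f_equal; ring).
assert (Q2 : psi (n*/2 + m*al) (m+n) = psi (m*al + n*/2) (m+n)) by (f_equal; ring).
pose proof (psi_mid (a*be + c*/2) (a+c) (b*/2 + d*be) (b+d) (m*be + n*/2) (m+n)) as YM1.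
pose proof (psi_mid (a*al + c*/2) (a+c) (b*/2 + d*al) (b+d) (m*al + n*/2) (m+n)) as YM2.
specialize (YM1 ltac:(lra) ltac:(lra) ltac:(rewrite Hm, Hn; field) ltac:(rewrite Hm, Hn; replace al with (1 - be) by lra; field)).
specialize (YM2 ltac:(lra) ltac:(lra) ltac:(rewrite Hm, Hn; field) ltac:(rewrite Hm, Hn; replace al with (1 - be) by lra; field)).
pose proof (G2 (a*be + b*/2) (a*al + b*/2) (a+b) ltac:(lra) ltac:(lra) ltac:(replace al with (1 - be) by lra; field)) as Z1.
pose proof (G2 (c*/2 + d*al) (c*/2 + d*be) (c+d) ltac:(lra) ltac:(lra) ltac:(replace al with (1 - be) by lra; field)) as Z2.
pose proof (psi_mid (a*be + b*/2) (a+b) (c*/2 + d*be) (c+d) (m*be + n*/2) (m+n)) as ZM1.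
pose proof (psi_mid (a*al + b*/2) (a+b) (c*/2 + d*al) (c+d) (m*al + n*/2) (m+n)) as ZM2.
specialize (ZM1 ltac:(lra) ltac:(lra) ltac:(rewrite Hm, Hn; field) ltac:(rewrite Hm, Hn; replace al with (1 - be) by lra; field)).
specialize (ZM2 ltac:(lra) ltac:(lra) ltac:(rewrite Hm, Hn; field) ltac:(rewrite Hm, Hn; replace al with (1 - be) by lra; field)).
pose proof (Lin a be al Ha Hbe0 Hl ltac:(lra)) as L1.
pose proof (Lin d be al Hd Hbe0 Hl ltac:(lra)) as L2.
pose proof (Lin b (/2) (/2) Hb ltac:(lra) ltac:(lra) ltac:(field)) as L3.
pose proof (Lin c (/2) (/2) Hc ltac:(lra) ltac:(lra) ltac:(field)) as L4.
pose proof (Lin m be al Hm0 Hbe0 Hl ltac:(lra)) as L5.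
pose proof (Lin n (/2) (/2) Hn0 ltac:(lra) ltac:(lra) ltac:(field)) as L6.
assert (LL : a * (plogp be + plogp al) + d * (plogp be + plogp al) + b * (plogp (/2) + plogp (/2)) + c * (plogp (/2) + plogp (/2))
   = 2 * (m * (plogp be + plogp al)) + 2 * (n * (plogp (/2) + plogp (/2)))) by (rewrite Hm, Hn; field).
lra.
Qed.

Lemma c_plus : forall f g x, continuity_pt f x -> continuity_pt g x -> continuity_pt (fun y => f y + g y) x.
Proof. intros. exact (continuity_pt_plus f g x H H0). Qed.
Lemma c_minus : forall f g x, continuity_pt f x -> continuity_pt g x -> continuity_pt (fun y => f y - g y) x.
Proof. intros. exact (continuity_pt_minus f g x H H0). Qed.
Lemma c_mult : forall f g x, continuity_pt f x -> continuity_pt g x -> continuity_pt (fun y => f y * g y) x.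
Proof. intros. exact (continuity_pt_mult f g x H H0). Qed.
Lemma c_opp : forall f x, continuity_pt f x -> continuity_pt (fun y => - f y) x.
Proof. intros. exact (continuity_pt_opp f x H). Qed.
Lemma c_const : forall k x, continuity_pt (fun _ => k) x.
Proof. intros. apply continuity_pt_const. intros a b; reflexivity. Qed.
Lemma c_id : forall x, continuity_pt (fun y => y) x.
Proof. intros. exact (derivable_continuous_pt _ _ (derivable_pt_id x)). Qed.
Lemma c_abs : forall f x, continuity_pt f x -> continuity_pt (fun y => Rabs (f y)) x.
Proof. intros. exact (continuity_pt_comp f Rabs x H (Rcontinuity_abs (f x))). Qed.

Lemma c_min : forall f g x, continuity_pt f x -> continuity_pt g x -> continuity_pt (fun y => Rmin (f y) (g y)) x.
Proof. intros f g x Hf Hg.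
 apply (continuity_pt_locally_ext (fun y => (f y + g y - Rabs (f y - g y)) * / 2) _ 1 x); [lra| |].
 - intros y _. unfold Rmin. destruct (Rle_dec (f y) (g y)).
   + rewrite Rabs_left1 by lra. field.
   + rewrite Rabs_right by lra. field.
 - apply c_mult; [|apply c_const]. apply c_minus; [apply c_plus; auto|]. apply c_abs, c_minus; auto.
Qed.

Lemma xlnx_bound : forall y, 0 < y -> y <= 1 -> Rabs (plogp y) <= 2 * sqrt y / ln 2.
Proof. intros y H0 H1. pose proof ln2_pos.
 set (s := sqrt y). assert (Hs : 0 < s) by (apply sqrt_lt_R0; lra).
 assert (Hss : s * s = y) by (apply sqrt_sqrt; lra).
 rewrite plogp_pos by lra.
 assert (Hln : ln y = 2 * ln s) by (rewrite <- Hss, ln_mult by lra; ring).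
 assert (Hneg : ln y <= 0) by (pose proof (ln_le_sub1 y H0); lra).
 assert (Hs1 : - ln s <= / s - 1).
 { pose proof (ln_le_sub1 (/ s) ltac:(apply Rinv_0_lt_compat; lra)). rewrite ln_Rinv in H2 by lra. lra. }
 assert (Hk : - (s * ln s) <= 1 - s).
 { assert (s * (- ln s) <= s * (/ s - 1)) by (apply Rmult_le_compat_l; lra).
   replace (s * (/ s - 1)) with (1 - s) in H2 by (field; lra). lra. }
 assert (s <= 1).
 { destruct (Rle_dec s 1); auto. assert (1 < s * s) by nra. lra. }
 assert (Ht : s * ln s <= 0).
 { pose proof (ln_le_sub1 s Hs). assert (ln s <= 0) by lra. nra. }
 assert (E : y * (ln y / ln 2) = 2 * (s * (s * ln s)) * / ln 2) by (rewrite Hln, <- Hss; field; lra).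
 rewrite E. unfold Rdiv. set (L := / ln 2). assert (HL : 0 < L) by (apply Rinv_0_lt_compat; lra).
 set (t := s * ln s) in *. assert (HsL : 0 < s * L) by (apply Rmult_lt_0_compat; lra).
 apply Rabs_le; split; nra.
Qed.

Lemma c_plogp_pt : forall x, continuity_pt plogp x.
Proof. intro x. pose proof ln2_pos as L2.
 destruct (Rtotal_order x 0) as [Hx|[Hx|Hx]].
 - apply (continuity_pt_locally_ext (fun _ => 0) plogp (-x) x); [lra| |apply c_const].
   intros y Hy. unfold Rdist in Hy. rewrite plogp_nonpos; auto.
   pose proof (Rle_abs (y - x)). lra.
 - subst x. unfold continuity_pt, continue_in, limit1_in, limit_in. intros eps He.
   set (k := eps * ln 2 / 2). assert (Hk : 0 < k) by (unfold k; apply Rmult_lt_0_compat; [apply Rmult_lt_0_compat|]; lra).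
   exists (Rmin 1 (k * k)). split; [apply Rmin_glb_lt; [lra| apply Rmult_lt_0_compat; lra]|].
   intros y [_ Hy]. simpl in Hy |- *. unfold R_dist in Hy |- *. rewrite plogp0, Rminus_0_r.
   rewrite Rminus_0_r in Hy.
   destruct (Rle_dec y 0) as [Hy0|Hy0].
   + rewrite (plogp_nonpos y Hy0). rewrite Rabs_R0. lra.
   + assert (Hy1 : y < 1) by (pose proof (Rmin_l 1 (k*k)); rewrite Rabs_right in Hy by lra; lra).
     assert (Hy2 : y < k * k) by (pose proof (Rmin_r 1 (k*k)); rewrite Rabs_right in Hy by lra; lra).
     pose proof (xlnx_bound y ltac:(lra) ltac:(lra)).
     assert (sqrt y < k). { rewrite <- (sqrt_pow2 k) by lra. apply sqrt_lt_1; try lra; simpl; nra. }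
     assert (2 * sqrt y / ln 2 < eps).
     { apply (Rmult_lt_reg_r (ln 2)); [lra|]. unfold Rdiv. rewrite Rmult_assoc, Rinv_l by lra.
       unfold k in H0. lra. }
     lra.
 - apply (continuity_pt_locally_ext (fun y => y * (ln y / ln 2)) plogp x x); [lra| |].
   + intros y Hy. unfold Rdist in Hy. rewrite plogp_pos; auto.
     pose proof (Rle_abs (x - y)). rewrite Rabs_minus_sym in Hy. lra.
   + apply c_mult; [apply c_id|]. unfold Rdiv. apply c_mult; [|apply c_const].
     exact (derivable_continuous_pt ln x (exist _ (/ x) (derivable_pt_lim_ln x Hx))).
Qed.

Lemma c_plogp : forall f x, continuity_pt f x -> continuity_pt (fun y => plogp (f y)) x.
Proof. intros. exact (continuity_pt_comp f plogp x H (c_plogp_pt (f x))). Qed.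

Ltac cont := repeat first [ apply c_const | apply c_id | apply c_plus | apply c_minus | apply c_mult | apply c_opp | apply c_min | apply c_plogp ].

Lemma g_cont : forall C1 C2 al x, continuity_pt (fun q => obj C1 C2 (dsbs q) al) x.
Proof. intros.
 cbv [obj CMI V0 VX1 VX2 VX12 VY VU Ent prob_eq omegas code joint vunion vX1 vX2 vY vU b2n adder List.map List.fold_right List.seq orb dsbs Bool.eqb Rdiv];
 cbn [Nat.add Nat.mul Nat.eq_dec nat_rec nat_rect aux_chan].
 cont.
Qed.

Lemma cont_eps : forall f x, continuity_pt f x -> forall eps, 0 < eps ->
  exists d, 0 < d /\ forall y, Rabs (y - x) < d -> Rabs (f y - f x) < eps.
Proof. intros f x H eps He. unfold continuity_pt, continue_in, limit1_in, limit_in in H.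
 destruct (H eps He) as [d [Hd Hy]]. exists d; split; auto. intros y Hyd.
 destruct (Req_dec y x) as [E|E].
 - subst. rewrite Rminus_diag, Rabs_R0; lra.
 - apply (Hy y). split; [unfold D_x, no_cond; split; auto|]. simpl; unfold R_dist; auto. Qed.

Lemma exist_max : forall C1 C2, exists qs, 0 <= qs <= 1 /\
  forall q, 0 <= q <= 1 -> forall w, (forall al, 0 <= al <= / 2 -> w <= obj C1 C2 (dsbs q) al) ->
  forall al, 0 <= al <= / 2 -> w <= obj C1 C2 (dsbs qs) al.
Proof.
 intros C1 C2. set (g := fun q al => obj C1 C2 (dsbs q) al).
 set (E := fun w => exists q, 0 <= q <= 1 /\ forall al, 0 <= al <= / 2 -> w <= g q al).
 destruct (classic (exists w, E w)) as [HE|HE].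
 2:{ exists 0. split; [lra|]. intros q Hq w Hw. exfalso. apply HE. exists w, q. split; auto. }
 assert (Hb : bound E).
 { exists (C1 + C2). intros w [q [Hq Hw]]. specialize (Hw 0 ltac:(lra)). unfold g, obj in Hw.
   pose proof (Rmin_l (C1 + C2) (Rmin (C1 + CMI (joint (dsbs q) 0) VX2 VY VX1)
        (Rmin (C2 + CMI (joint (dsbs q) 0) VX1 VY VX2)
           (Rmin (CMI (joint (dsbs q) 0) VX12 VY V0)
              (/ 2 * (C1 + C2 + CMI (joint (dsbs q) 0) VX12 VY VU + CMI (joint (dsbs q) 0) VX1 VU VX2 +
                  CMI (joint (dsbs q) 0) VX2 VU VX1)))))). lra. }
 destruct (completeness E Hb HE) as [S [HS1 HS2]].
 assert (Hn : forall n : nat, exists q, 0 <= q <= 1 /\ forall al, 0 <= al <= / 2 -> S - / (INR n + 1) < g q al).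
 { intro n. assert (Hp : 0 < / (INR n + 1)) by (apply Rinv_0_lt_compat; pose proof (pos_INR n); lra).
   apply NNPP. intro Hc.
   assert (is_upper_bound E (S - / (INR n + 1))).
   { intros w [q [Hq Hw]]. apply Rnot_lt_le. intro Hlt. apply Hc. exists q. split; auto.
     intros al Hal. specialize (Hw al Hal). lra. }
   specialize (HS2 _ H). lra. }
 set (u := fun n => proj1_sig (constructive_indefinite_description _ (Hn n))).
 assert (Hu : forall n, 0 <= u n <= 1 /\ forall al, 0 <= al <= / 2 -> S - / (INR n + 1) < g (u n) al).
 { intro n. unfold u. destruct (constructive_indefinite_description _ (Hn n)) as [q Hq]. exact Hq. }
 destruct (Bolzano_Weierstrass u (fun c => 0 <= c <= 1) (compact_P3 0 1) (fun n => proj1 (Hu n))) as [l Hl].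
 assert (Hl01 : 0 <= l <= 1).
 { split; apply Rnot_lt_le; intro Hc.
   - assert (Hd : 0 < - l) by lra.
     destruct (Hl (disc l (mkposreal _ Hd)) 0%nat) as [p [_ Hp]].
     + exists (mkposreal _ Hd). intros y Hy; exact Hy.
     + unfold disc in Hp; simpl in Hp. destruct (Hu p) as [[H0 H1] _].
       pose proof (Rle_abs (u p - l)). lra.
   - assert (Hd : 0 < l - 1) by lra.
     destruct (Hl (disc l (mkposreal _ Hd)) 0%nat) as [p [_ Hp]].
     + exists (mkposreal _ Hd). intros y Hy; exact Hy.
     + unfold disc in Hp; simpl in Hp. destruct (Hu p) as [[H0 H1] _].
       rewrite Rabs_minus_sym in Hp. pose proof (Rle_abs (l - u p)). lra. }
 exists l. split; auto.
 intros q Hq w Hw al Hal.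
 assert (HwS : w <= S) by (apply HS1; exists q; split; auto).
 apply (Rle_trans _ S _ HwS). fold (g l al).
 apply Rnot_lt_le. intro Hlt.
 set (eps := S - g l al). assert (He : 0 < eps / 2) by (unfold eps; lra).
 destruct (cont_eps (fun q => g q al) l (g_cont C1 C2 al l) (eps / 2) He) as [d [Hd Hcd]].
 destruct (archimed_cor1 (eps / 2) He) as [N [HN HN0]].
 destruct (Hl (disc l (mkposreal _ Hd)) N) as [p [Hp Hpd]].
 { exists (mkposreal _ Hd). intros y Hy; exact Hy. }
 unfold disc in Hpd; simpl in Hpd.
 specialize (Hcd (u p) Hpd). simpl in Hcd.
 destruct (Hu p) as [_ Hup]. specialize (Hup al Hal).
 assert (HNp : INR N <= INR p) by (apply le_INR; auto).
 assert (HN0' : 0 < INR N) by (apply lt_0_INR; auto).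
 assert (/ (INR p + 1) <= / INR N) by (apply Rinv_le_contravar; lra).
 pose proof (Rle_abs (g (u p) al - g l al)). unfold eps in *. lra.
Qed.

Lemma mk_eq : forall p : bool -> bool -> R, p = mk (p false false) (p false true) (p true false) (p true true).
Proof. intros. apply functional_extensionality; intro x; apply functional_extensionality; intro y.
 destruct x, y; reflexivity. Qed.

Lemma dsbs_eq : forall q, dsbs q = mk ((1 - q) / 2) (q / 2) (q / 2) ((1 - q) / 2).
Proof. intros. apply functional_extensionality; intro x; apply functional_extensionality; intro y.
 destruct x, y; reflexivity. Qed.

Theorem lemma2 (C1 C2 : R) (hC1 : 0 <= C1) (hC2 : 0 <= C2) :
  exists q : R, 0 <= q <= 1 /\
    forall (p : bool -> bool -> R), is_pmf2 p ->
    forall vp vq : R,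
      is_min_alpha C1 C2 p vp -> is_min_alpha C1 C2 (dsbs q) vq -> vp <= vq.
Proof.
 destruct (exist_max C1 C2) as [qs [Hqs Hmax]]. exists qs. split; auto.
 intros p [Hnn Hsum] vp vq [Hp1 _] [_ Hq2]. apply Hq2.
 set (q := p false true + p true false).
 pose proof (Hnn false false). pose proof (Hnn false true). pose proof (Hnn true false). pose proof (Hnn true true).
 apply (Hmax q ltac:(unfold q; lra) vp).
 intros al Hal. apply (Rle_trans _ _ _ (Hp1 al Hal)).
 rewrite (mk_eq p), dsbs_eq. apply main_ineq; unfold q; lra.
Qed.
Print Assumptions lemma2.
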